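(* Suppose $H$ satisfies (B1) and (B2), and for $\alpha>0$ let $v^\alpha$ be the viscosity solution of (DP) (satisfying $|v^\alpha|\le M/\alpha$, $M:=\sup|H(\cdot,0,\cdot)|$). Then there exist constants $M_1,M_2>0$, independent of $\alpha$, such that for all $\alpha>0$, $x,y\in\mathbb{T}^d$ and $\xi\in I$, $$\Big|\int_I k(\xi,\eta)\big(v^\alpha(x,\xi)-v^\alpha(y,\eta)\big)\,d\eta\Big|\le M_1+M_2\|Dv^\alpha\|_{L^\infty(\mathbb{T}^d\times I)}.$$
   Context: $I\subset\mathbb{R}$ finite interval, $|I|=1$; $k$ Borel measurable on $I\times I$ with $0<k_0\le k\le k_1$. $H\in C(\mathbb{T}^d\times\mathbb{R}^d)\otimes\mathcal{B}(I)$ with $H(\cdot,p,\cdot)$ bounded for each $p$. (DP): $\alpha v(x,\xi)+H(x,Dv(x,\xi),\xi)+\int_I k(\xi,\eta)(v(x,\xi)-v(x,\eta))d\eta=0$ in $\mathbb{T}^d\times I$ in the viscosity sense. (B1): $C_1|p|^m-C_2\le H(x,p,\xi)$ for constants $C_1,C_2>0$, $m>1$. (B2): for each $R>0$ a modulus $\omega_R$ with $|H(x,p,\xi)-H(y,p,\xi)|\le\omega_R(|x-y|)$ for $|p|\le R$. $v^\alpha(\cdot,\xi)$ is Lipschitz for each $\xi$, uniformly in $\xi$ (for fixed $\alpha$), so $\|Dv^\alpha\|_{L^\infty}$ is finite. *)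

(* Defs.v *)
From HB Require Import structures.
From mathcomp Require Import all_boot all_order all_algebra.
From mathcomp Require Import all_classical all_reals all_analysis.
Set Implicit Arguments. Unset Strict Implicit. Unset Printing Implicit Defensive.
Import Order.TTheory GRing.Theory Num.Theory.
Import numFieldNormedType.Exports.
Local Open Scope classical_set_scope.
Local Open Scope ring_scope.

Section Defs.
Variables (R : realType) (d : nat).
Notation V := 'rV[R]_d.

Definition enorm (p : V) : R := Num.sqrt (\sum_(i < d) (p 0 i) ^+ 2).

(* Z^d-periodic functions = functions on the torus T^d = R^d / Z^d *)
Definition Zperiodic (T : Type) (f : V -> T) : Prop :=
  forall (x : V) (z : 'rV[int]_d), f (x + map_mx (fun n : int => n%:~R) z) = f x.

Definition grad (f : V -> R) (x : V) : V :=
  \row_(i < d) ('D_(delta_mx 0 i) f x).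

Definition C1 (f : V -> R) : Prop :=
  (forall x, differentiable f x) /\ continuous (grad f).

Definition modulus (w : R -> R) : Prop :=
  w 0 = 0 /\ (forall r, 0 <= r -> 0 <= w r) /\
  (forall r s, 0 <= r -> r <= s -> w r <= w s) /\
  (w x @[x --> 0^'+] --> 0).

Definition coupling (I : interval R) (k : R -> R -> R) (v : V -> R -> R)
    (x : V) (xi : R) : R :=
  Rintegral lebesgue_measure [set` I] (fun eta => k xi eta * (v x xi - v x eta)).

Definition visc_sub (I : interval R) (k : R -> R -> R) (H : V -> V -> R -> R)
    (alpha : R) (v : V -> R -> R) : Prop :=
  forall (xi : R), xi \in I -> forall (x0 : V) (phi : V -> R), C1 phi ->
    (\forall y \near x0, v y xi - phi y <= v x0 xi - phi x0) ->
    alpha * v x0 xi + H x0 (grad phi x0) xi + coupling I k v x0 xi <= 0.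

Definition visc_super (I : interval R) (k : R -> R -> R) (H : V -> V -> R -> R)
    (alpha : R) (v : V -> R -> R) : Prop :=
  forall (xi : R), xi \in I -> forall (x0 : V) (phi : V -> R), C1 phi ->
    (\forall y \near x0, v y xi - phi y >= v x0 xi - phi x0) ->
    alpha * v x0 xi + H x0 (grad phi x0) xi + coupling I k v x0 xi >= 0.

Definition visc_sol (I : interval R) (k : R -> R -> R) (H : V -> V -> R -> R)
    (alpha : R) (v : V -> R -> R) : Prop :=
  Zperiodic v /\
  (forall xi, xi \in I -> continuous (fun x => v x xi)) /\
  (forall x, measurable_fun [set` I] (v x)) /\
  (exists C, forall x xi, xi \in I -> `|v x xi| <= C) /\
  visc_sub I k H alpha v /\ visc_super I k H alpha v.

(* ||D v||_{L^infty(T^d x I)} : supremum of |D_x v(x,xi)| over xi in I and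
   points x where v(.,xi) is differentiable *)
Definition Dnorm (I : interval R) (v : V -> R -> R) : R :=
  sup [set r : R | exists (xi : R) (x : V), [/\ xi \in I,
        differentiable (fun y => v y xi) x & r = enorm (grad (fun y => v y xi) x)]].

Definition Hsup0 (I : interval R) (H : V -> V -> R -> R) : R :=
  sup [set r : R | exists (x : V) (xi : R), xi \in I /\ r = `|H x 0 xi|].

End Defs.

(* Main.v *)
Require Import Defs.
From HB Require Import structures.
From mathcomp Require Import all_boot all_order all_algebra.
From mathcomp Require Import all_classical all_reals all_analysis.
From mathcomp Require Import ring lra measurable_realfun.

Import Order.TTheory GRing.Theory Num.Theory.
Import numFieldNormedType.Exports.
Local Open Scope classical_set_scope.
Local Open Scope ring_scope.


Section S.
Variables (R : realType) (d : nat).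
Notation V := 'rV[R]_d.

Lemma gmax (f : V -> R) (r : R) : continuous f ->
  (forall x, exists x', `|x'| <= r /\ f x <= f x') -> exists c, forall x, f x <= f c.
Proof.
move=> fc hr.
have [x0 [x0r _]] := hr 0.
set A := closed_ball_ Num.norm (0 : V) r.
have cA : compact A.
  apply: bounded_closed_compact; last exact: closed_closed_ball_.
  exists r; split; first by rewrite num_real.
  move=> M rM x; rewrite /A /closed_ball_ /= sub0r normrN => xr.
  exact: (le_trans xr (ltW rM)).
have x0A : A x0 by rewrite /A /closed_ball_ /= sub0r normrN.
have [c cA' cmax] := compact_EVT_max (ex_intro _ x0 x0A) cA (continuous_subspaceT fc).
exists c => x; have [x' [x'r fx]] := hr x.
apply: (le_trans fx); apply: cmax; rewrite inE /A /closed_ball_ /= sub0r normrN //.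
Qed.

Lemma mxnorm_le (x : V) (r : R) : 0 <= r -> (forall j, `|x 0 j| <= r) -> `|x| <= r.
Proof.
move=> r0 h; rewrite [`|x|]/Num.norm /= mx_normrE.
apply/bigmax_leP; split => // -[i j] _ /=.
by rewrite (ord1 i); exact: h.
Qed.

Lemma coord_le_mxnorm (x : V) j : `|x 0 j| <= `|x|.
Proof.
rewrite [`|x|]/Num.norm /= mx_normrE.
by apply/bigmax_geP; right; exists (0, j).
Qed.

Lemma period_red (T : Type) (f : V -> T) : Zperiodic f ->
  forall x, exists x', `|x'| <= 1 /\ f x' = f x.
Proof.
move=> fp x.
pose z : 'rV[int]_d := \row_j (- Num.floor (x 0 j)).
exists (x + map_mx (fun n : int => n%:~R) z); split; last exact: fp.
apply: mxnorm_le => // j; rewrite !mxE intrN.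
have h1 := real_floor_le (num_real (x 0 j)).
have h2 := real_floorD1_gt (num_real (x 0 j)).
rewrite intrD in h2.
rewrite ger0_norm; last by rewrite subr_ge0.
by rewrite lerBlDl ltW // addrC.
Qed.


Lemma is_derive_coord (x v : V) j : is_derive x v (fun N : V => N 0 j) (v 0 j).
Proof.
have @f : {linear V -> R}.
  by exists (fun N : V => N 0 j); do 2![eexists]; do ?[constructor];
     rewrite ?mxE// => ? *; rewrite ?mxE//; move=> ?; rewrite !mxE.
have fc : continuous f by exact: coord_continuous.
have -> : (fun N : V => N 0 j) = f by [].
apply: DeriveDef; first by apply: diff_derivable; exact: linear_differentiable.
by rewrite deriveE ?diff_lin //; exact: linear_differentiable.
Qed.

Definition coordf j : V -> R := fun N => N 0 j.

Definition qf (y : V) (c : R) : V -> R :=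
  c \*: (\sum_(j < d) (coordf j - cst (y 0 j)) ^+ 2).

Lemma qfE y c x : qf y c x = c * \sum_(j < d) (x 0 j - y 0 j) ^+ 2.
Proof.
rewrite /qf /=. congr (_ * _).
rewrite fct_sumE; apply: eq_bigr => j _ //.
Qed.

Lemma is_derive_qf y c x v :
  is_derive x v (qf y c) (c * \sum_(j < d) (2 * (x 0 j - y 0 j)) * v 0 j).
Proof.
have h : forall j, is_derive x v ((coordf j - cst (y 0 j)) ^+ 2)
   ((2%:R * (coordf j - cst (y 0 j)) x ^+ 1) *: (v 0 j - 0)).
  move=> j; apply: is_deriveX; exact: (is_deriveB (is_derive_coord x v j) (is_derive_cst _ _ _)).
have := is_deriveZ c (is_derive_sum h).
rewrite /qf => H0; apply: is_derive_eq H0 _.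
rewrite /GRing.scale /=; congr (_ * _).
apply: eq_bigr => j _; rewrite expr1 /coordf /= subr0.
by rewrite /GRing.scale /=.
Qed.


Lemma qf_diff y c x : differentiable (qf y c) x.
Proof.
rewrite /qf.
apply: differentiableZ.
apply: differentiable_sum => j.
apply: differentiableX.
apply: differentiableB; last exact: differentiable_cst.
exact: differentiable_coord.
Qed.

Lemma grad_qf y c x : grad (qf y c) x = (2 * c) *: (x - y).
Proof.
apply/rowP => i; rewrite !mxE.
have [_ ->] := is_derive_qf y c x (delta_mx 0 i).
rewrite (bigD1 i) //= big1 ?addr0; last first.
  by move=> j ji; rewrite mxE eqxx /= (negbTE ji) mulr0.
by rewrite !mxE !eqxx mulr1 mulrA [c * 2]mulrC.
Qed.

Lemma qf_C1 y c : C1 (qf y c).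
Proof.
split; first exact: qf_diff.
have -> : grad (qf y c) = fun x => (2 * c) *: (x - y).
  by apply: funext => x; exact: grad_qf.
move=> x; apply: (@continuousZl_tmp _ _ _ (fun z : V => z - y) (2 * c) x).
apply: (@continuousB _ _ _ id (fun _ => y)); [exact: cvg_id | exact: cst_continuous].
Qed.

Lemma grad_cst (a : R) x : grad (fun _ : V => a) x = 0.
Proof. by apply/rowP => i; rewrite !mxE; exact: (derive_cst a). Qed.

Lemma cst_C1 (a : R) : C1 (fun _ : V => a).
Proof.
split; first by move=> x; exact: differentiable_cst.
have -> : grad (fun _ : V => a) = fun _ => 0 by apply: funext => x; exact: grad_cst.
exact: cst_continuous.
Qed.


Lemma enorm_ge0 (p : V) : 0 <= enorm p.
Proof. exact: sqrtr_ge0. Qed.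

Lemma sumsq_ge0 (p : V) : 0 <= \sum_(i < d) (p 0 i) ^+ 2.
Proof. by apply: sumr_ge0 => i _; exact: sqr_ge0. Qed.

Lemma enorm_sqr (p : V) : enorm p ^+ 2 = \sum_(i < d) (p 0 i) ^+ 2.
Proof. by rewrite /enorm sqr_sqrtr // sumsq_ge0. Qed.

Lemma enormZ (a : R) (p : V) : enorm (a *: p) = `|a| * enorm p.
Proof.
rewrite /enorm.
have -> : \sum_(i < d) ((a *: p) 0 i) ^+ 2 = a ^+ 2 * \sum_(i < d) (p 0 i) ^+ 2.
  by rewrite mulr_sumr; apply: eq_bigr => i _; rewrite mxE exprMn.
by rewrite sqrtrM ?sqr_ge0 // sqrtr_sqr.
Qed.

Lemma coord_le_enorm (p : V) i : `|p 0 i| <= enorm p.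
Proof.
rewrite /enorm -sqrtr_sqr; apply: ler_wsqrtr.
rewrite (bigD1 i) //= lerDl; apply: sumr_ge0 => j _; exact: sqr_ge0.
Qed.

Lemma enorm_sumsq_bound (p : V) : enorm p <= \sum_(i < d) (p 0 i) ^+ 2 + 1.
Proof.
set s := \sum_(i < d) _.
have s0 : 0 <= s by exact: sumsq_ge0.
rewrite /enorm -/s; apply: (@le_trans _ _ (Num.sqrt ((s + 1) ^+ 2))); last first.
  by rewrite sqrtr_sqr ger0_norm // addr_ge0.
apply: ler_wsqrtr.
rewrite expr2; nra.
Qed.

Lemma enorm_box (p : V) : (forall i, `|p 0 i| <= 1) -> enorm p <= d%:R + 1.
Proof.
move=> h; apply: (le_trans (enorm_sumsq_bound p)); rewrite lerD2r.
have -> : (d%:R : R) = \sum_(i < d) 1 by rewrite sumr_const card_ord.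
apply: ler_sum => i _; rewrite expr2.
apply: (le_trans (ler_norm _)); rewrite normrM.
exact: mulr_ile1 (normr_ge0 _) (normr_ge0 _) (h i) (h i).
Qed.


Lemma qf_sq y c x : qf y c x = c * enorm (x - y) ^+ 2.
Proof. by rewrite qfE enorm_sqr; congr (_ * _); apply: eq_bigr => j _; rewrite !mxE. Qed.

Lemma qf_ge0 y c x : 0 <= c -> 0 <= qf y c x.
Proof. by move=> c0; rewrite qf_sq mulr_ge0 // sqr_ge0. Qed.

Lemma mxnorm_gt (x : V) (r : R) : 0 <= r -> r < `|x| -> exists j, r < `|x 0 j|.
Proof.
move=> r0 rx; apply/not_existsP => h; move: rx; apply/negP; rewrite -leNgt.
by apply: mxnorm_le => // j; have := h j; move/negP; rewrite -leNgt.
Qed.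

Lemma qf_max (f : V -> R) (B : R) y c : continuous f -> (forall x, `|f x| <= B) -> 0 < c ->
  exists x0, forall x, f x - qf y c x <= f x0 - qf y c x0.
Proof.
move=> fc fB c0.
have B0 : 0 <= B by apply: le_trans (fB 0); exact: normr_ge0.
set rho := 2 * B / c + 1.
have rho0 : 0 <= rho.
  have : 0 <= B / c by rewrite divr_ge0 // ltW.
  rewrite /rho -mulrA; lra.
have gc : continuous (fun x => f x - qf y c x).
  move=> x; apply: continuousB; first exact: fc.
  by apply: differentiable_continuous; exact: qf_diff.
apply: (@gmax _ (`|y| + rho) gc) => x.
have [xy|xy] := leP `|x - y| rho.
  exists x; split => //.
  have -> : x = y + (x - y) by rewrite addrC subrK.
  by apply: (le_trans (ler_normD _ _)); rewrite lerD2l.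
exists y; split; first by rewrite lerDl.
have [j hj] := mxnorm_gt _ _ rho0 xy.
have -> : qf y c y = 0 by rewrite qfE big1 ?mulr0 // => i _; rewrite subrr expr0n.
rewrite subr0.
have q2 : 2 * B <= qf y c x.
  rewrite qf_sq.
  have h1 : rho ^+ 2 <= enorm (x - y) ^+ 2.
    rewrite ler_sqr ?nnegrE ?enorm_ge0 //.
    by apply: (le_trans (ltW hj)); exact: coord_le_enorm.
  have h2 : 2 * B / c <= rho ^+ 2.
    rewrite /rho expr2; nra.
  rewrite -(ler_pM2l c0) in h2.
  rewrite mulrCA divff ?gt_eqF // mulr1 in h2.
  apply: (le_trans h2); rewrite ler_pM2l //.
have := fB x; have := fB y; rewrite !ler_norml => /andP[h3 _] /andP[_ h4].
lra.
Qed.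


Definition LipP (f : V -> R) (a : R) := forall x y, f x - f y <= a * enorm (x - y).

Lemma LipP_mono f a b : a <= b -> LipP f a -> LipP f b.
Proof.
move=> ab h x y; apply: (le_trans (h x y)); apply: ler_wpM2r => //; exact: enorm_ge0.
Qed.

Lemma lip_step (f : V -> R) (B K a : R) :
  continuous f -> (forall x, `|f x| <= B) -> 0 < K -> 0 <= a ->
  (forall y c x0, 0 < c -> (forall x, f x - qf y c x <= f x0 - qf y c x0) ->
     enorm ((2 * c) *: (x0 - y)) <= K) ->
  LipP f a -> LipP f (a / 4 + 2 * K).
Proof.
move=> fc fB K0 a0 hg hL x y.
set r := enorm (x - y).
have r0 : 0 <= r by exact: enorm_ge0.
have [rz|rpos] := eqVneq r 0.
  by have := hL x y; rewrite -/r rz !mulr0.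
have rp : 0 < r by rewrite lt_neqAle eq_sym rpos r0.
set c := 2 * K / r.
have c0 : 0 < c by rewrite /c divr_gt0 // mulr_gt0.
have [x0 hx0] := qf_max f B y c fc fB c0.
have h1 := hg y c x0 c0 hx0.
rewrite enormZ ger0_norm in h1; last by rewrite mulr_ge0 // ltW.
have h2 : enorm (x0 - y) <= r / 4.
  set e := enorm (x0 - y) in h1 *.
  have := ler_wpM2r (ltW rp) h1.
  have -> : 2 * c * e * r = 4 * K * e by rewrite /c; field; rewrite gt_eqF.
  move=> h8; nra.
have h3 := hx0 x.
have h4 : 0 <= qf y c x0 by apply: qf_ge0; exact: ltW.
have h5 : qf y c x = 2 * K * r.
  rewrite qf_sq -/r /c; field; by rewrite gt_eqF.
have h6 := hL x0 y.
have h7 : a * enorm (x0 - y) <= a * (r / 4) by apply: ler_wpM2l.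
rewrite h5 in h3.
have -> : (a / 4 + 2 * K) * r = a * (r / 4) + 2 * K * r by field.
lra.
Qed.


Lemma lip_final (f : V -> R) (B K L0 : R) :
  continuous f -> (forall x, `|f x| <= B) -> 0 < K -> 0 <= L0 ->
  (forall y c x0, 0 < c -> (forall x, f x - qf y c x <= f x0 - qf y c x0) ->
     enorm ((2 * c) *: (x0 - y)) <= K) ->
  LipP f L0 -> LipP f (3 * K).
Proof.
move=> fc fB K0 L00 hg hL.
have p4 n : 0 < (4 : R) ^+ n by rewrite exprn_gt0.
have hn : forall n, LipP f (L0 / 4 ^+ n + 3 * K).
  elim=> [|n IH].
    apply: LipP_mono hL; rewrite expr0 divr1; lra.
  have a0 : 0 <= L0 / 4 ^+ n + 3 * K.
    have : 0 <= L0 / 4 ^+ n by rewrite divr_ge0 // ltW.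
    lra.
  have := @lip_step f B K _ fc fB K0 a0 hg IH.
  apply: LipP_mono.
  rewrite exprS.
  have -> : (L0 / 4 ^+ n + 3 * K) / 4 + 2 * K = L0 / (4 * 4 ^+ n) + 3 * K - K / 4.
    by field; rewrite gt_eqF.
  lra.
move=> x y.
set r := enorm (x - y).
have r0 : 0 <= r by exact: enorm_ge0.
rewrite leNgt; apply/negP => hlt.
set delta := f x - f y - 3 * K * r.
have dp : 0 < delta by rewrite /delta; lra.
set n := Num.bound (L0 * r / delta).
have hb := @archi_boundP R (L0 * r / delta) (divr_ge0 (mulr_ge0 L00 r0) (ltW dp)).
have hn4 : (n%:R : R) <= 4 ^+ n.
  have -> : (4 : R) ^+ n = (4 ^ n)%:R by rewrite natrX.
  by rewrite ler_nat ltnW // ltn_expl.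
have h1 : L0 * r / delta < 4 ^+ n by exact: lt_le_trans hb hn4.
have h2 : L0 * r < delta * 4 ^+ n.
  by rewrite -ltr_pdivrMl // mulrC.
have h3 := hn n x y; rewrite -/r in h3.
have h4 : L0 / 4 ^+ n * r < delta.
  rewrite mulrAC ltr_pdivrMr //.
rewrite mulrDl in h3.
move: h4; rewrite /delta ltrBrDr => h4.
by move: h3; rewrite leNgt h4.
Qed.


Lemma enormN (p : V) : enorm (- p) = enorm p.
Proof. by rewrite -scaleN1r enormZ normrN normr1 mul1r. Qed.

Lemma osc_bound (f : V -> R) (K : R) : Zperiodic f -> 0 <= K -> LipP f K ->
  forall x y, f x - f y <= K * (d%:R + 1).
Proof.
move=> fp K0 hL x y.
have gp : Zperiodic (fun w => f (x + w)).
  by move=> w z /=; rewrite addrA; exact: fp.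
have [w [w1 hw]] := period_red _ _ gp (y - x).
rewrite /= [x + (y - x)]addrC subrK in hw.
rewrite -hw; apply: (le_trans (hL _ _)).
rewrite opprD addrA subrr add0r enormN; apply: ler_wpM2l => //.
apply: enorm_box => j; exact: le_trans (coord_le_mxnorm w j) w1.
Qed.

Lemma powR_le_inv (a b m : R) : 0 < m -> 0 <= a -> 0 <= b -> a `^ m <= b `^ m -> a <= b.
Proof.
move=> m0 a0 b0 h; rewrite leNgt; apply/negP => ba.
have := gt0_ltr_powR m0 b0 a0 ba; rewrite ltNge h //.
Qed.

Lemma closeW (W c a b m : R) : 0 <= W -> 0 < c -> 0 <= a -> 0 <= b -> 1 < m ->
  (forall K, 0 < K -> a + b * W <= K `^ m -> W <= c * K) ->
  W <= 2 * c * (1 + (a + 2 * b * c) `^ (1 / (m - 1))).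
Proof.
move=> W0 c0 a0 b0 m1 h.
have Bq0 : 0 <= (a + 2 * b * c) `^ (1 / (m - 1)) by exact: powR_ge0.
have [Wz|Wp] := eqVneq W 0.
  by rewrite Wz; apply: mulr_ge0; [rewrite mulr_ge0 // ltW | lra].
have Wp' : 0 < W by rewrite lt_neqAle eq_sym Wp W0.
set u := W / (2 * c).
have u0 : 0 < u by rewrite /u divr_gt0 // mulr_gt0.
have hW : W = 2 * c * u by rewrite /u; field; rewrite gt_eqF.
have hlt : u `^ m < a + b * W.
  rewrite ltNge; apply/negP => hle.
  have := h u u0 hle; rewrite hW; nra.
rewrite hW ler_pM2l ?mulr_gt0 //.
have [u1|u1] := leP u 1; first lra.
have m10 : 0 < m - 1 by lra.
have hum : u `^ m = u * u `^ (m - 1) by rewrite mulr_powRB1 // ?ltW //; lra.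
have hlt2 : u `^ (m - 1) < a + 2 * b * c.
  have : u * u `^ (m - 1) < (a + 2 * b * c) * u.
    rewrite -hum; apply: (lt_le_trans hlt); rewrite hW; nra.
  rewrite mulrC ltr_pM2r //.
have p0 : 0 < 1 / (m - 1) by rewrite divr_gt0.
have n1 : u `^ (m - 1) \is Num.nneg by rewrite nnegrE powR_ge0.
have n2 : a + 2 * b * c \is Num.nneg by rewrite nnegrE; nra.
have := gt0_ltr_powR p0 n1 n2 hlt2.
have -> : (u `^ (m - 1)) `^ (1 / (m - 1)) = u.
  rewrite -powRrM.
  have -> : (m - 1) * (1 / (m - 1)) = 1 by field; rewrite gt_eqF.
  by rewrite powRr1 // ltW.
lra.
Qed.

End S.

Section IS.
Variable R : realType.

Lemma meas_sec (I : interval R) (k : R -> R -> R) xi :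
  measurable_fun ([set` I] `*` [set` I]) (fun p : R * R => k p.1 p.2) ->
  xi \in I -> measurable_fun [set` I] (k xi).
Proof.
move=> mk xiI.
have -> : k xi = (fun p : R * R => k p.1 p.2) \o pair xi by [].
apply: (measurable_comp _ _ mk).
- by apply: measurableX; exact: measurable_itv.
- by move=> _ [eta etaI <-]; split => //=; rewrite inE in xiI.
- apply: measurable_funS (pair1_measurable _) => //.
Qed.

Lemma integ_ok (I : interval R) (f : R -> R) (C : R) :
  lebesgue_measure [set` I] = 1%:E -> measurable_fun [set` I] f ->
  (forall eta, eta \in I -> `|f eta| <= C) ->
  lebesgue_measure.-integrable [set` I] (EFin \o f).
Proof.
move=> mI mf fC.
apply: (@measurable_bounded_integrable _ _ _ lebesgue_measure f [set` I] (measurable_itv I)) => //.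
- by change (lebesgue_measure [set` I] < +oo)%E; rewrite mI ltry.
- exists C; split; first by rewrite num_real.
  move=> M CM eta etaI; apply: le_trans (ltW CM); by apply: fC.
Qed.

End IS.

Lemma sup_ge0_nonneg (R : realType) (S : set R) : (forall r, S r -> 0 <= r) -> 0 <= sup S.
Proof.
move=> h; have [hs|hs] := pselect (has_sup S).
  have [[e Se] _] := hs; exact: le_trans (h e Se) (sup_upper_bound hs Se).
by rewrite sup_out.
Qed.

Lemma pw_up (R : realType) (kk k1 A B W : R) : 0 <= kk -> kk <= k1 -> 0 <= W -> A <= B + W ->
  kk * A <= kk * B + k1 * W.
Proof. move=> *; nra. Qed.

Lemma pw_lo (R : realType) (kk k1 A B W : R) : 0 <= kk -> kk <= k1 -> 0 <= W -> B - W <= A ->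
  kk * B - k1 * W <= kk * A.
Proof. move=> *; nra. Qed.

Lemma near_all (R : realType) (d : nat) (x0 : 'rV[R]_d) (P : 'rV[R]_d -> Prop) :
  (forall z, P z) -> \forall z \near x0, P z.
Proof.
move=> h; rewrite /prop_near1 /nbhs /=.
exists (fun _ _ => setT); first by move=> i j; exact: filterT.
by move=> z _; exact: h.
Qed.

Lemma abs_le2 (R : realType) (A B C : R) : `|A| <= C -> `|B| <= C -> A - B <= 2 * C.
Proof. rewrite !ler_norml => /andP[? ?] /andP[? ?]; lra. Qed.

Lemma ineqB (R : realType) (C1 C2 E Hv M k1 W T A : R) : 0 < C1 ->
  C1 * E - C2 <= Hv -> A + Hv + T <= 0 -> - (2 * M + k1 * W) <= T -> `|A| <= M ->
  0 <= W -> E <= (3 * M + C2) / C1 + `|k1| / C1 * W.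
Proof.
move=> C1p h1 h2 h3 h4 W0.
have h5 : k1 * W <= `|k1| * W by apply: ler_wpM2r => //; exact: ler_norm.
have -> : (3 * M + C2) / C1 + `|k1| / C1 * W = (3 * M + C2 + `|k1| * W) / C1.
  by field; rewrite gt_eqF.
rewrite ler_pdivlMr // mulrC.
move: h4; rewrite ler_norml => /andP[h6 h7].
move: h1 h2 h3 h5 h6 h7; move: (C1 * E) (k1 * W) (`|k1| * W) => t1 t2 t3; lra.
Qed.

Theorem mainTheorem6 (R : realType) (d : nat) (I : interval R)
  (k : R -> R -> R) (k0 k1 : R) (H : 'rV[R]_d -> 'rV[R]_d -> R -> R) :
  (* I finite interval of length 1 *)
  lebesgue_measure [set` I] = 1%:E ->
  (* k Borel on I x I with 0 < k0 <= k <= k1 *)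
  measurable_fun ([set` I] `*` [set` I]) (fun p : R * R => k p.1 p.2) ->
  0 < k0 ->
  (forall xi eta, xi \in I -> eta \in I -> k0 <= k xi eta <= k1) ->
  (* H in C(T^d x R^d) (x) B(I), H(.,p,.) bounded for each p *)
  (forall p xi, Zperiodic (fun y => H y p xi)) ->
  (forall xi, xi \in I -> continuous (fun xp : 'rV[R]_d * 'rV[R]_d => H xp.1 xp.2 xi)) ->
  (forall x p, measurable_fun [set` I] (H x p)) ->
  (forall p, exists C, forall x xi, xi \in I -> `|H x p xi| <= C) ->
  (* (B1) *)
  (exists C1 C2 m, [/\ 0 < C1, 0 < C2, 1 < m &
     forall x p xi, xi \in I -> C1 * (enorm p `^ m) - C2 <= H x p xi]) ->
  (* (B2) *)
  (forall Rr, 0 < Rr -> exists w, modulus w /\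
     forall x y p xi, xi \in I -> enorm p <= Rr ->
       `|H x p xi - H y p xi| <= w (enorm (x - y))) ->
  exists M1 M2 : R, 0 < M1 /\ 0 < M2 /\
    forall (alpha : R) (v : 'rV[R]_d -> R -> R), 0 < alpha ->
      visc_sol I k H alpha v ->
      (forall x xi, xi \in I -> `|v x xi| <= Hsup0 I H / alpha) ->
      (exists L, forall x y xi, xi \in I -> `|v x xi - v y xi| <= L * enorm (x - y)) ->
      forall (x y : 'rV[R]_d) (xi : R), xi \in I ->
        `|Rintegral lebesgue_measure [set` I]
            (fun eta => k xi eta * (v x xi - v y eta))| <= M1 + M2 * Dnorm I v.
Proof.
move=> mI mk k0p hk Hper Hcont Hmeas Hbd [C1 [C2 [m [C1p C2p m1 HB1]]]] _.
set M := Hsup0 I H.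
have [C0 HC0] := Hbd 0.
set S0 := [set r : R | exists (x : 'rV[R]_d) (xi : R), xi \in I /\ r = `|H x 0 xi|].
have S0ub : has_ubound S0.
  by exists C0 => r [x [xi [xiI ->]]]; exact: HC0.
have HM : forall x xi, xi \in I -> `|H x 0 xi| <= M.
  move=> x xi xiI; apply: (ub_le_sup S0ub); exists x, xi; split => //.
have M0 : 0 <= M.
  by apply: sup_ge0_nonneg => r [x [xi [_ ->]]].
set c := 3 * (d%:R + 1) : R.
have c0 : 0 < c by rewrite /c mulr_gt0 // ltr_wpDl.
set a := (3 * M + C2) / C1.
set b := `|k1| / C1.
have a0 : 0 <= a by rewrite /a divr_ge0 // ?ltW //; lra.
have b0 : 0 <= b by rewrite /b divr_ge0 // ltW.
set W0 := 2 * c * (1 + (a + 2 * b * c) `^ (1 / (m - 1))).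
have W00 : 0 <= W0.
  rewrite /W0 mulr_ge0 ?mulr_ge0 ?ltW //; have := powR_ge0 (a + 2 * b * c) (1 / (m - 1)); lra.
exists (2 * M + `|k1| * W0 + 1), 1; split.
  have : 0 <= `|k1| * W0 by rewrite mulr_ge0.
  lra.
split; first by [].
move=> alpha v ha [Vper [Vcont [Vmeas [_ [Vsub Vsup]]]]] Vb [L HL] x y xi xiI.
have k1p : 0 < k1 by have /andP[h1 h2] := hk xi xi xiI xiI; lra.
have nk1 : `|k1| = k1 by rewrite gtr0_norm.
have kb : forall xi' eta, xi' \in I -> eta \in I -> 0 <= k xi' eta /\ k xi' eta <= k1.
  move=> xi' eta h1 h2; have /andP[h3 h4] := hk xi' eta h1 h2; split => //; lra.
have av : forall z eta, eta \in I -> `|alpha * v z eta| <= M.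
  move=> z eta etaI; rewrite normrM gtr0_norm //.
  have := ler_wpM2l (ltW ha) (Vb z eta etaI).
  by rewrite -/M [alpha * (M / alpha)]mulrC divfK ?gt_eqF.
have vp : forall eta, Zperiodic (fun z => v z eta).
  by move=> eta z w /=; rewrite (Vper z w).
have vmax : forall eta, eta \in I -> exists xM, forall z, v z eta <= v xM eta.
  move=> eta etaI; apply: (gmax R d (fun z => v z eta) 1 (Vcont eta etaI)) => z.
  have [z' [z'1 hz']] := period_red R d R _ (vp eta) z.
  by exists z'; split => //; rewrite hz'.
have vmin : forall eta, eta \in I -> exists xm, forall z, v xm eta <= v z eta.
  move=> eta etaI.
  have nc : continuous (fun z => - v z eta).
    by move=> z; apply: continuousN; exact: Vcont.
  have [xm hxm] : exists xm, forall z, - v z eta <= - v xm eta.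
    apply: (gmax R d (fun z => - v z eta) 1 nc) => z.
    have [z' [z'1 hz']] := period_red R d R _ (vp eta) z.
    by exists z'; split => //=; rewrite hz'.
  by exists xm => z; have := hxm z; rewrite lerN2.
have cplM : forall eta xM, eta \in I -> (forall z, v z eta <= v xM eta) ->
    coupling I k v xM eta <= 2 * M.
  move=> eta xM etaI hxM.
  have hn : \forall z \near xM, v z eta - 0 <= v xM eta - 0.
    by apply: near_all => z; rewrite !subr0; exact: hxM z.
  have := Vsub eta etaI xM (fun _ => 0) (cst_C1 R d 0) hn.
  rewrite grad_cst.
  have := av xM eta etaI; have := HM xM eta etaI.
  rewrite !ler_norml => /andP[h1 h2] /andP[h3 h4].
  move: (coupling I k v xM eta) => t; lra.
have cplm : forall eta xm, eta \in I -> (forall z, v xm eta <= v z eta) ->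
    - (2 * M) <= coupling I k v xm eta.
  move=> eta xm etaI hxm.
  have hn : \forall z \near xm, v z eta - 0 >= v xm eta - 0.
    by apply: near_all => z; rewrite !subr0; exact: hxm z.
  have := Vsup eta etaI xm (fun _ => 0) (cst_C1 R d 0) hn.
  rewrite grad_cst.
  have := av xm eta etaI; have := HM xm eta etaI.
  rewrite !ler_norml => /andP[h1 h2] /andP[h3 h4].
  move: (coupling I k v xm eta) => t; lra.
set SW := [set r : R | exists eta (z w : 'rV[R]_d), eta \in I /\ r = v z eta - v w eta].
have SWub : has_ubound SW.
  exists (2 * (M / alpha)) => r [eta [z [w [etaI ->]]]].
  exact: abs_le2 (Vb z eta etaI) (Vb w eta etaI).
set W := sup SW.
have hW : forall eta z w, eta \in I -> v z eta - v w eta <= W.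
  move=> eta z w etaI; apply: (ub_le_sup SWub); exists eta, z, w; split => //.
have W0' : 0 <= W by have := hW xi x x xiI; rewrite subrr.
have fin1 : fine (lebesgue_measure [set` I]) = 1.
  by change (fine (lebesgue_measure [set` I]) = 1); rewrite mI.
have integ_k : forall xi' (g : R -> R) (Cg : R), xi' \in I -> measurable_fun [set` I] g ->
    (forall eta, eta \in I -> `|g eta| <= Cg) ->
    lebesgue_measure.-integrable [set` I] (EFin \o (fun eta => k xi' eta * g eta)).
  move=> xi' g Cg xi'I mg hg.
  apply: (integ_ok R I _ (k1 * Cg) mI).
    apply: measurable_funM => //; exact: meas_sec mk xi'I.
  move=> eta etaI; rewrite normrM; apply: ler_pM => //.
  have [h1 h2] := kb xi' eta xi'I etaI; by rewrite ger0_norm.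
  exact: hg.
have integ_v : forall xi' z w, xi' \in I ->
    lebesgue_measure.-integrable [set` I]
      (EFin \o (fun eta => k xi' eta * (v z xi' - v w eta))).
  move=> xi' z w xi'I; apply: (integ_k xi' _ (2 * (M / alpha)) xi'I).
    by apply: measurable_funB => //; exact: measurable_cst.
  move=> eta etaI; rewrite (le_trans (ler_normB _ _)) //.
  have := Vb z xi' xi'I; have := Vb w eta etaI; lra.
have integ_c : forall r : R, lebesgue_measure.-integrable [set` I] (EFin \o (fun _ => r)).
  move=> r; apply: (integ_ok R I _ `|r| mI) => //; exact: measurable_cst.
have integ_vc : forall xi' z w (r : R), xi' \in I ->
    lebesgue_measure.-integrable [set` I]
      (EFin \o (fun eta => k xi' eta * (v z xi' - v w eta) + r)).
  move=> xi' z w r xi'I.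
  apply: (integ_ok R I _ (k1 * (2 * (M / alpha)) + `|r|) mI).
    apply: measurable_funD; last exact: measurable_cst.
    apply: measurable_funM; first exact: meas_sec mk xi'I.
    by apply: measurable_funB => //; exact: measurable_cst.
  move=> eta etaI; apply: (le_trans (ler_normD _ _)); rewrite lerD2r normrM.
  apply: ler_pM => //.
    by have [h1 h2] := kb xi' eta xi'I etaI; rewrite ger0_norm.
  rewrite (le_trans (ler_normB _ _)) //.
  have := Vb z xi' xi'I; have := Vb w eta etaI; lra.
have RIc : forall xi' z (r : R), xi' \in I ->
    Rintegral lebesgue_measure [set` I] (fun eta => k xi' eta * (v z xi' - v z eta) + r)
    = coupling I k v z xi' + r.
  move=> xi' z r xi'I.
  rewrite RintegralD; [|exact: measurable_itv|exact: integ_v|exact: integ_c].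
  rewrite Rintegral_cst; last exact: measurable_itv.
  by rewrite fin1 mulr1.
have Tb : forall xi', xi' \in I -> forall z w,
    - (2 * M + k1 * W) <= Rintegral lebesgue_measure [set` I]
        (fun eta => k xi' eta * (v z xi' - v w eta)) <= 2 * M + k1 * W.
  move=> xi' xi'I z w.
  have [xM hxM] := vmax xi' xi'I; have [xm hxm] := vmin xi' xi'I.
  have c1 := cplM xi' xM xi'I hxM; have c2 := cplm xi' xm xi'I hxm.
  apply/andP; split.
    have h : Rintegral lebesgue_measure [set` I]
        (fun eta => k xi' eta * (v xm xi' - v xm eta) + - (k1 * W)) <=
      Rintegral lebesgue_measure [set` I] (fun eta => k xi' eta * (v z xi' - v w eta)).
      apply: le_Rintegral; [exact: measurable_itv | exact: integ_vc | exact: integ_v |].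
      move=> eta etaI; have [h1 h2] := kb xi' eta xi'I etaI.
      apply: pw_lo => //.
      have := hxm z; have := hW eta w xm etaI; lra.
    rewrite RIc // in h; apply: le_trans h; lra.
  have h : Rintegral lebesgue_measure [set` I] (fun eta => k xi' eta * (v z xi' - v w eta)) <=
      Rintegral lebesgue_measure [set` I]
        (fun eta => k xi' eta * (v xM xi' - v xM eta) + k1 * W).
    apply: le_Rintegral; [exact: measurable_itv | exact: integ_v | exact: integ_vc |].
    move=> eta etaI; have [h1 h2] := kb xi' eta xi'I etaI.
    apply: pw_up => //.
    have := hxM z; have := hW eta xM w etaI; lra.
  rewrite RIc // in h; apply: le_trans h _; lra.
have hK : forall K, 0 < K -> a + b * W <= K `^ m -> W <= c * K.
  move=> K K0 hKm.
  apply: ge_sup; first by exists 0; exists xi, x, x; split => //; rewrite subrr.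
  move=> r [eta [z [w [etaI ->]]]].
  have hg : forall y0 c' x0, 0 < c' ->
      (forall x1, v x1 eta - qf R d y0 c' x1 <= v x0 eta - qf R d y0 c' x0) ->
      enorm ((2 * c') *: (x0 - y0)) <= K.
    move=> y0 c' x0 c'0 hmax.
    have hn : \forall z1 \near x0, v z1 eta - qf R d y0 c' z1 <= v x0 eta - qf R d y0 c' x0.
      exact: near_all.
    have := Vsub eta etaI x0 (qf R d y0 c') (qf_C1 R d y0 c') hn.
    rewrite grad_qf => hsub.
    have hT := Tb eta etaI x0 x0; move/andP: hT => [hT _].
    have hB := HB1 x0 ((2 * c') *: (x0 - y0)) eta etaI.
    apply: (powR_le_inv R _ _ m); [lra | exact: enorm_ge0 | exact: ltW |].
    apply: le_trans hKm.
    exact: ineqB C1p hB hsub hT (av x0 eta etaI) W0'.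
  have hL0 : LipP R d (fun z1 => v z1 eta) `|L|.
    move=> x1 y1 /=; apply: (le_trans (ler_norm _)); apply: (le_trans (HL x1 y1 eta etaI)).
    apply: ler_wpM2r; [exact: enorm_ge0 | exact: ler_norm].
  have hL3 := lip_final R d (fun z1 => v z1 eta) (M / alpha) K `|L| (Vcont eta etaI)
    (fun z1 => Vb z1 eta etaI) K0 (normr_ge0 L) hg hL0.
  have := osc_bound R d _ (3 * K) (vp eta) (_ : 0 <= 3 * K) hL3 z w.
  have -> : c * K = 3 * K * (d%:R + 1) by rewrite /c; ring.
  apply; lra.
have Wle := closeW R W c a b m W0' c0 a0 b0 m1 hK.
have hT := Tb xi xiI x y.
have hT' : `|Rintegral lebesgue_measure [set` I] (fun eta => k xi eta * (v x xi - v y eta))|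
    <= 2 * M + k1 * W by rewrite ler_norml.
have hD : 0 <= Dnorm I v.
  by apply: sup_ge0_nonneg => r [xi1 [x1 [_ _ ->]]]; exact: enorm_ge0.
have hk1W : k1 * W <= k1 * W0 by apply: ler_wpM2l => //; exact: ltW.
rewrite nk1 mul1r.
move: hT' hD hk1W; move: (Rintegral _ _ _) => t; lra.
Qed.
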